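(* Let $\alpha>4$ and $0<N_1\le N_2$. Consider the two-player Random Access Game in which player $i\in\{1,2\}$ chooses $\Lambda_i\in[0,N_i]$ and receives payoff \[ U_i(\Lambda_1,\Lambda_2)=\sup_{\beta>0}\ \Lambda_i\log(1+\beta)\,e^{-(\Lambda_1+\Lambda_2)\beta^{2/\alpha}} . \] Let $\Lambda^*(\alpha/2)$ be the unique positive solution $L$ of \[ \frac{\alpha}{4}=\left(1+L^{\alpha/4}\right)\log\left(1+L^{-\alpha/4}\right). \] Then the game has a unique Nash equilibrium. If $\sqrt{\Lambda^*(\alpha/2)}<N_1$, this equilibrium is \[ (\Lambda_1^*,\Lambda_2^* )=\left(\sqrt{\Lambda^*(\alpha/2)},\sqrt{\Lambda^*(\alpha/2)}\right). \] Otherwise it is given by $\Lambda_1^*=N_1$ and $\Lambda_2^*=\min(x,N_2)$, where $x$ is the solution of \[ N_1=x\left(\frac{\alpha}{2\left(1+x^{\alpha/2}\right)\log\left(1+x^{-\alpha/2}\right)}-1\right). \]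
   Context: A Nash equilibrium is a pair $(\Lambda_1^*,\Lambda_2^* )\in[0,N_1]\times[0,N_2]$ such that $\Lambda_1^*$ maximizes $U_1(\cdot,\Lambda_2^* )$ over $[0,N_1]$ and $\Lambda_2^*$ maximizes $U_2(\Lambda_1^*,\cdot)$ over $[0,N_2]$. Here $\log$ is the natural logarithm. *)

(* Defs.v *)
From HB Require Import structures.
From mathcomp Require Import all_boot all_order all_algebra.
From mathcomp Require Import all_classical all_reals all_analysis.
Set Implicit Arguments. Unset Strict Implicit. Unset Printing Implicit Defensive.
Import Order.TTheory GRing.Theory Num.Theory.
Local Open Scope classical_set_scope.
Local Open Scope ring_scope.

(* Payoff of a player choosing rate li when the two rates are l1, l2:
   sup_{beta > 0} li * log(1+beta) * exp(-(l1+l2) * beta^(2/alpha)),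
   taken in the extended reals (it is always finite on the strategy sets). *)
Definition rag_payoff (R : realType) (alpha li l1 l2 : R) : \bar R :=
  ereal_sup [set (li * ln (1 + b) * expR (- (l1 + l2) * b `^ (2 / alpha)))%:E
            | b in [set b : R | 0 < b]].

Definition U1 (R : realType) (alpha l1 l2 : R) : \bar R := rag_payoff alpha l1 l1 l2.
Definition U2 (R : realType) (alpha l1 l2 : R) : \bar R := rag_payoff alpha l2 l1 l2.

Definition is_nash (R : realType) (alpha N1 N2 l1 l2 : R) : Prop :=
  [/\ 0 <= l1 <= N1, 0 <= l2 <= N2,
      (forall m : R, 0 <= m <= N1 -> (U1 alpha m l2 <= U1 alpha l1 l2)%E) &
      (forall m : R, 0 <= m <= N2 -> (U2 alpha l1 m <= U2 alpha l1 l2)%E)].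

(* Main.v *)
Require Import Defs.
From HB Require Import structures.
From mathcomp Require Import all_boot all_order all_algebra.
From mathcomp Require Import all_classical all_reals all_analysis.
From mathcomp.algebra_tactics Require Import ring lra.
Import Order.TTheory GRing.Theory Num.Theory.
Import numFieldNormedType.Exports.
Local Open Scope classical_set_scope.
Local Open Scope ring_scope.
Set Implicit Arguments. Unset Strict Implicit. Unset Printing Implicit Defensive.

Section Aux.
Variable R : realType.
Implicit Types b x y : R.

Definition psi (b : R) := b / ((1 + b) * ln (1 + b)).

Lemma ln_lt_sub1 x : 0 < x -> x != 1 -> ln x < x - 1.
Proof.
move=> x0 x1; have : ln x != 0.
  apply: contra x1 => /eqP h; by rewrite -[x]lnK ?posrE // h expR0.
move=> /expR_gt1Dx; rewrite lnK ?posrE // => h; lra.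
Qed.

Lemma ln1p_gt0 b : 0 < b -> 0 < ln (1 + b).
Proof. move=> b0; apply: ln_gt0; lra. Qed.

Lemma ln1p_lt b : 0 < b -> ln (1 + b) < b.
Proof.
move=> b0; have h1 : 0 < 1 + b by lra.
have h2 : 1 + b != 1 by rewrite gt_eqF //; lra.
have := ln_lt_sub1 h1 h2; lra.
Qed.

Lemma ln1p_gt b : 0 < b -> b / (1 + b) < ln (1 + b).
Proof.
move=> b0; have h1 : 0 < 1 + b by lra.
have h2 : (1 + b)^-1 != 1 by rewrite invr_eq1 gt_eqF //; lra.
have := ln_lt_sub1 (eq_ind_r is_true h1 (invr_gt0 (1+b))) h2.
rewrite lnV ?posrE //.
have -> : (1 + b)^-1 - 1 = - (b / (1 + b)) by field; lra.
lra.
Qed.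

Lemma psi_gt0 b : 0 < b -> 0 < psi b.
Proof.
move=> b0; rewrite /psi divr_gt0 // mulr_gt0 ?ln1p_gt0 //; lra.
Qed.

Lemma psi_lt1 b : 0 < b -> psi b < 1.
Proof.
move=> b0; have h1 : 0 < 1 + b by lra.
have := ln1p_gt b0; rewrite /psi ltr_pdivrMr // ltr_pdivrMr ?mulr_gt0 ?ln1p_gt0 //.
lra.
Qed.

Lemma psi_gt b : 0 < b -> (1 + b)^-1 < psi b.
Proof.
move=> b0; have h1 : 0 < 1 + b by lra.
have hl := ln1p_gt0 b0.
have := ln1p_lt b0; rewrite /psi ltr_pdivlMr ?mulr_gt0 //.
rewrite mulrA mulVf ?gt_eqF // mul1r; lra.
Qed.

Lemma cont_within (f df : R -> R) a c :
  (forall x, a <= x <= c -> is_derive x 1 f (df x)) -> {within [set` `[a, c]], continuous f}.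
Proof.
move=> H; apply: derivable_within_continuous => x; rewrite in_itv /= => /H D.
by case: D.
Qed.

Lemma is_derive_ln1p y : 0 <= y ->
  is_derive y 1 (fun z : R => ln (1 + z)) ((1 + y)^-1).
Proof.
move=> y0.
have h1 : 0 < 1 + y by lra.
have D : is_derive y 1 (fun z : R => 1 + z) 1.
  by apply: is_derive_eq; rewrite add0r mulr1.
have := @is_derive1_comp R (@ln R) (fun z => 1 + z) y _ _ (is_derive1_ln h1) D.
by rewrite mulr1.
Qed.


Lemma is_derive_xln1p y : 0 <= y ->
  is_derive y 1 (fun z : R => (1 + z) * ln (1 + z)) (ln (1 + y) + 1).
Proof.
move=> y0.
have D : is_derive y 1 (fun z : R => 1 + z) 1.
  by apply: is_derive_eq; rewrite add0r mulr1.
have E := is_derive_ln1p y0.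
have := is_deriveM D E.
have -> : ((fun z : R => 1 + z) * (fun z : R => ln (1 + z)))%R = (fun z : R => (1 + z) * ln (1 + z)) by [].
move=> H; apply: is_derive_eq.
rewrite /GRing.scale /= mulr1 mulfV; [lra|]. lra.
Qed.

Lemma psi_decr b1 b2 : 0 < b1 -> b1 < b2 -> psi b2 < psi b1.
Proof.
move=> b10 b12.
set D1 := (1 + b1) * ln (1 + b1).
have hl1 := ln1p_gt0 b10.
have b20 : 0 < b2 by lra.
have hl2 := ln1p_gt0 b20.
have D1p : 0 < D1 by rewrite /D1 mulr_gt0 //; lra.
have D2p : 0 < (1 + b2) * ln (1 + b2) by rewrite mulr_gt0 //; lra.
pose F := fun y : R => b1 * ((1 + y) * ln (1 + y)) - D1 * y.
have dF : forall y, b1 <= y -> is_derive y 1 F (b1 * (ln (1 + y) + 1) - D1).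
  move=> y hy.
  have := is_derive_xln1p (ltW (lt_le_trans b10 hy)).
  move=> H.
  have H2 := is_deriveZ b1 H.
  have H3 : is_derive y 1 (fun z : R => D1 * z) D1.
    by apply: is_derive_eq; rewrite /GRing.scale /= mulr1.
  have := is_deriveB H2 H3.
  move=> H4; apply: is_derive_eq; by [].
have [c cin Hc] : exists2 c, c \in `]b1, b2[ & F b2 - F b1 = (b1 * (ln (1 + c) + 1) - D1) * (b2 - b1).
  apply: MVT => //.
    by move=> x; rewrite in_itv /= => /andP[h _]; exact: dF (ltW h).
  by apply: cont_within => x /andP[h _]; exact: dF.
move: cin; rewrite in_itv /= => /andP[c1 c2].
have lc : ln (1 + b1) < ln (1 + c) by rewrite ltr_ln ?posrE; lra.
have lb := ln1p_lt b10.
have Fpos : 0 < F b2 - F b1.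
  rewrite Hc mulr_gt0 //; [|lra].
  have : b1 * ln (1 + b1) < b1 * ln (1 + c) by rewrite ltr_pM2l.
  rewrite /D1; lra.
have : b2 * D1 < b1 * ((1 + b2) * ln (1 + b2)).
  move: Fpos; rewrite /F /D1; lra.
rewrite /psi -/D1 ltr_pdivrMr // mulrAC ltr_pdivlMr //.
Qed.



Lemma is_derive_G (w : R) :
  is_derive w 1 (fun w : R => ln (ln (1 + expR w))) (psi (expR w)).
Proof.
have e0 := expR_gt0 w.
have H1 := @is_derive1_comp R (fun z : R => ln (1 + z)) expR w _ _
  (is_derive_ln1p (ltW e0)) (is_derive_expR w).
have l0 := ln1p_gt0 e0.
have H2 := @is_derive1_comp R (@ln R) ((fun z : R => ln (1 + z)) \o expR) w _ _
  (is_derive1_ln l0) H1.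
apply: is_derive_eq.
rewrite /psi /=; field.
apply/andP; split; rewrite gt_eqF //; lra.
Qed.

Lemma Gtangent (w w0 : R) :
  ln (ln (1 + expR w)) <= ln (ln (1 + expR w0)) + psi (expR w0) * (w - w0).
Proof.
set G := fun w : R => ln (ln (1 + expR w)).
have cG : forall a c : R, {within [set` `[a, c]], continuous G}.
  by move=> a c; apply: cont_within => x _; exact: is_derive_G.
rewrite -/(G w) -/(G w0).
case: (ltgtP w w0) => [hw|hw|->]; last by rewrite subrr mulr0 addr0.
- have [c cin Hc] : exists2 c, c \in `]w, w0[ & G w0 - G w = psi (expR c) * (w0 - w).
    by apply: MVT => // x _; exact: is_derive_G.
  move: cin; rewrite in_itv /= => /andP[c1 c2].
  have : psi (expR w0) < psi (expR c) by apply: psi_decr; rewrite ?expR_gt0 ?ltr_expR.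
  move=> hp.
  have : 0 <= (psi (expR c) - psi (expR w0)) * (w0 - w) by rewrite mulr_ge0 //; lra.
  lra.
- have [c cin Hc] : exists2 c, c \in `]w0, w[ & G w - G w0 = psi (expR c) * (w - w0).
    by apply: MVT => // x _; exact: is_derive_G.
  move: cin; rewrite in_itv /= => /andP[c1 c2].
  have : psi (expR c) < psi (expR w0) by apply: psi_decr; rewrite ?expR_gt0 ?ltr_expR.
  move=> hp.
  have : 0 <= (psi (expR w0) - psi (expR c)) * (w - w0) by rewrite mulr_ge0 //; lra.
  lra.
Qed.

Lemma TI b bs : 0 < b -> 0 < bs ->
  ln (ln (1 + b)) <= ln (ln (1 + bs)) + psi bs * (ln b - ln bs).
Proof.
move=> b0 bs0; have := Gtangent (ln b) (ln bs).
by rewrite !lnK ?posrE.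
Qed.


Lemma psi_derivable b : 0 < b -> derivable psi b 1.
Proof.
move=> b0.
have -> : psi = ((fun z : R => z) * (fun z : R => ((1 + z) * ln (1 + z))^-1))%R.
  by apply/funext => z; rewrite /psi.
apply: derivableM; first exact: derivable_id.
apply: derivableV.
  rewrite gt_eqF // mulr_gt0 ?ln1p_gt0 //; lra.
by case: (is_derive_xln1p (ltW b0)).
Qed.

Lemma psi_ivt (a c e : R) : 1 <= a -> 0 < c -> 0 <= e < 1 ->
  exists2 t, 0 < t & psi (t `^ a) = c * t + e.
Proof.
move=> a1 c0 /andP[e0 e1].
pose h := fun t : R => psi (t `^ a) - (c * t + e).
pose t0 := (1 - e) / (2 * (c + 1)).
pose t1 := 2 / c.
have t0p : 0 < t0 by rewrite divr_gt0 //; lra.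
have t0e : t0 * (2 * (c + 1)) = 1 - e by rewrite /t0 mulfVK //; lra.
have t1e : t1 * c = 2 by rewrite /t1 mulfVK //; lra.
have t1p : 0 < t1 by rewrite divr_gt0 //; lra.
have t01 : t0 < t1 by nra.
have dh : forall t, 0 < t -> derivable h t 1.
  move=> t t0'; apply: derivableB; last first.
    by apply: derivableD; [by case: (is_deriveZ c (is_derive_id t 1)) | exact: derivable_cst].
  apply/derivable1_diffP; apply: differentiable_comp.
    by apply/derivable1_diffP; case: (is_derive1_powR a t0').
  by apply/derivable1_diffP; apply: psi_derivable; apply: powR_gt0.
have ch : {within [set` `[t0, t1]], continuous h}.
  apply: derivable_within_continuous => x; rewrite in_itv /= => /andP[hx _].
  apply: dh; lra.
have h0 : 0 < h t0.
  have t0le1 : t0 <= 1 by nra.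
  have pa : t0 `^ a <= t0 by apply: ge1r_powR => //; rewrite t0p.
  have pa0 : 0 < t0 `^ a by apply: powR_gt0.
  have := psi_gt pa0.
  have : (1 + t0)^-1 <= (1 + t0 `^ a)^-1 by rewrite lef_pV2 ?posrE; lra.
  have : 1 - t0 <= (1 + t0)^-1.
    rewrite -div1r ler_pdivlMr; [nra | lra].
  rewrite /h; nra.
have h1 : h t1 < 0.
  have := psi_lt1 (powR_gt0 a t1p).
  rewrite /h; nra.
have hv : Num.min (h t0) (h t1) <= 0 <= Num.max (h t0) (h t1).
  by rewrite ge_min le_max (ltW h0) (ltW h1) orbT.
have [t tin ht] := IVT (ltW t01) ch hv.
exists t.
  by move: tin; rewrite in_itv /= => /andP[ht0 _]; lra.
by move: ht; rewrite /h; lra.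
Qed.

End Aux.

Section Game.
Variable R : realType.

Lemma core (dd l1 l2 m bs b : R) : 0 < dd -> 0 <= l2 -> 0 < l1 -> 0 < m ->
  0 < bs -> 0 < b ->
  psi bs = dd * (l1 + l2) * bs `^ dd ->
  (ln m - ln l1) * (1 - l1 * bs `^ dd) <= 0 ->
  m * ln (1 + b) * expR (- (m + l2) * b `^ dd) <=
  l1 * ln (1 + bs) * expR (- (l1 + l2) * bs `^ dd).
Proof.
move=> d0 l20 l10 m0 bs0 b0 hpsi hX.
have lb0 := ln1p_gt0 b0.
have lbs0 := ln1p_gt0 bs0.
set t := b `^ dd; set ts := bs `^ dd.
have tE : t = expR (dd * ln b) by rewrite /t /powR gt_eqF.
have tsE : ts = expR (dd * ln bs) by rewrite /ts /powR gt_eqF.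
have ts0 : 0 < ts by rewrite tsE expR_gt0.
have t0 : 0 < t by rewrite tE expR_gt0.
set X := ln m - ln l1.
set Y := dd * (ln b - ln bs).
have E0 : forall u v : R, expR v * (1 + (u - v)) <= expR u.
  move=> u v; have := expR_ge1Dx (u - v).
  have -> : expR u = expR v * expR (u - v) by rewrite -expRD addrC subrK.
  move=> h; rewrite ler_pM2l ?expR_gt0 //.
have E1 : l1 * ts * (1 + X + Y) <= m * t.
  have := E0 (ln m + dd * ln b) (ln l1 + dd * ln bs).
  rewrite !expRD !lnK ?posrE // -tE -tsE /X /Y.
  have -> : 1 + (ln m + dd * ln b - (ln l1 + dd * ln bs)) = 1 + (ln m - ln l1) + dd * (ln b - ln bs) by ring.
  by [].
have E2 : ts * (1 + Y) <= t.
  have := E0 (dd * ln b) (dd * ln bs).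
  rewrite -tE -tsE /Y.
  have -> : 1 + (dd * ln b - dd * ln bs) = 1 + dd * (ln b - ln bs) by ring.
  by [].
have E3 : l2 * (ts * (1 + Y)) <= l2 * t by rewrite ler_wpM2l.
have T := TI b0 bs0.
have T2 : psi bs * (ln b - ln bs) = (l1 * ts + l2 * ts) * Y.
  by rewrite hpsi /Y /ts; ring.
have key : ln m + ln (ln (1 + b)) - (m + l2) * t <= ln l1 + ln (ln (1 + bs)) - (l1 + l2) * ts.
  have hX' : X * (1 - l1 * ts) <= 0 by [].
  have XE : ln m = ln l1 + X by rewrite /X; ring.
  rewrite XE.
  nra.
have eq1 : forall x y z : R, 0 < x -> 0 < y -> x * y * expR z = expR (ln x + ln y + z).
  by move=> x y z x0 y0; rewrite !expRD !lnK ?posrE.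
rewrite eq1 // eq1 // ler_expR !mulNr; lra.
Qed.


Lemma xexp_le (x : R) : 0 <= x -> x != 1 -> x * expR (- x) < expR (-1).
Proof.
move=> x0 x1.
have h : x < expR (x - 1).
  have := @expR_gt1Dx R (x - 1); rewrite subr_eq0 => /(_ x1); lra.
have -> : expR (-1) = expR (- x) * expR (x - 1) by rewrite -expRD; congr expR; ring.
by rewrite mulrC ltr_pM2l ?expR_gt0.
Qed.

Lemma xexp_inc (x y : R) : 0 <= x -> x < y -> y <= 1 -> x * expR (- x) < y * expR (- y).
Proof.
move=> x0 xy y1.
set dd := y - x.
have dd0 : 0 < dd by rewrite /dd; lra.
have F1 : 1 - dd < expR (- dd).
  have := @expR_gt1Dx R (- dd); rewrite oppr_eq0 gt_eqF // => /(_ isT); lra.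
have EF : expR dd * expR (- dd) = 1 by rewrite -expRD subrr expR0.
have E1 : 1 < expR dd.
  have := @expR_gt1Dx R dd; rewrite gt_eqF // => /(_ isT); lra.
have -> : expR (- x) = expR (- y) * expR dd by rewrite -expRD; congr expR; rewrite /dd; ring.
have ey := expR_gt0 (- y).
suff : x * expR dd < y.
  move=> h; rewrite mulrCA [y * _]mulrC ltr_pM2l //.
have hx : x <= 1 - dd by rewrite /dd; lra.
have : x * (expR dd - 1) <= (1 - dd) * (expR dd - 1) by rewrite ler_wpM2r //; lra.
have : (1 - dd) * (expR dd - 1) < expR (- dd) * (expR dd - 1) by rewrite ltr_pM2r //; lra.
rewrite /dd in EF F1 *.
nra.
Qed.

Definition capok (N l t : R) := [/\ 0 < l, l <= N, l * t <= 1 & (l * t = 1 \/ l = N)].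

Lemma argmax (N l t : R) : 0 < t -> 0 < N -> 0 <= l <= N ->
  (forall m, 0 <= m <= N -> m * expR (- (m * t)) <= l * expR (- (l * t))) ->
  capok N l t.
Proof.
move=> t0 N0 /andP[l0 lN] H.
have lt0 : 0 <= l * t by rewrite mulr_ge0 // ltW.
case: (leP 1 (N * t)) => Nt.
- have m0 : 0 <= t^-1 <= N.
    rewrite invr_ge0 (ltW t0) /= -[N]mulr1 -[t^-1]mul1r ler_pdivrMr //; lra.
  have := H _ m0; rewrite mulVf ?gt_eqF // => h1.
  have h2 : expR (-1) <= l * t * expR (- (l * t)).
    have := ler_wpM2l (ltW t0) h1; rewrite mulrA mulfV ?gt_eqF // mul1r.
    by rewrite [t * _]mulrA [t * l]mulrC.
  have lt1 : l * t = 1.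
    apply/eqP; apply: contraT => hne.
    have := xexp_le lt0 hne; lra.
  split => //; [| by rewrite lt1 | by left].
  by rewrite lt_neqAle l0 andbT; apply/eqP => l00; move: lt1; rewrite -l00 mul0r; lra.
- have m0 : 0 <= N <= N by rewrite (ltW N0) lexx.
  have := H _ m0 => h1.
  have lN' : l = N.
    apply/eqP; apply: contraT => hne.
    have ltN : l < N by rewrite lt_neqAle hne.
    have ltt : l * t < N * t by rewrite ltr_pM2r.
    have := xexp_inc lt0 ltt (ltW Nt).
    move=> h2.
    have := ler_wpM2l (ltW t0) h1.
    rewrite !mulrA ![t * _]mulrC; lra.
  split => //; [by rewrite lN' | by rewrite lN' ltW | by right].
Qed.


Lemma powR_inv_alpha (alpha t : R) : 0 < alpha -> 0 <= t ->
  (t `^ (alpha / 2)) `^ (2 / alpha) = t.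
Proof.
move=> a0 t0; rewrite -powRrM.
have -> : alpha / 2 * (2 / alpha) = 1 by field; rewrite gt_eqF.
by rewrite powRr1.
Qed.

Lemma pay_ub (alpha li l1 l2 M : R) :
  (forall b, 0 < b -> li * ln (1 + b) * expR (- (l1 + l2) * b `^ (2 / alpha)) <= M) ->
  (rag_payoff alpha li l1 l2 <= M%:E)%E.
Proof. by move=> H; apply: ge_ereal_sup => _ [b b0 <-]; rewrite lee_fin; exact: H. Qed.

Lemma pay_lb (alpha li l1 l2 b : R) : 0 < b ->
  ((li * ln (1 + b) * expR (- (l1 + l2) * b `^ (2 / alpha)))%:E <= rag_payoff alpha li l1 l2)%E.
Proof. by move=> b0; apply: ereal_sup_ubound; exists b. Qed.

Lemma rag_sym (alpha li l1 l2 : R) : rag_payoff alpha li l1 l2 = rag_payoff alpha li l2 l1.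
Proof. by rewrite /rag_payoff (addrC l1 l2). Qed.

Lemma player_suff (alpha N li lo t m : R) : 4 < alpha -> 0 < t -> 0 <= lo ->
  psi (t `^ (alpha / 2)) = 2 / alpha * (li + lo) * t -> capok N li t -> 0 <= m <= N ->
  (rag_payoff alpha m m lo <= rag_payoff alpha li li lo)%E.
Proof.
move=> ha t0 lo0 hpsi [li0 liN lit hcap] /andP[m0 mN].
have a0 : 0 < alpha by lra.
set bs := t `^ (alpha / 2).
have bs0 : 0 < bs by apply: powR_gt0.
have tE : bs `^ (2 / alpha) = t by apply: powR_inv_alpha => //; exact: ltW.
apply: le_trans (pay_lb _ _ _ _ bs0).
apply: pay_ub => b b0.
have lb0 := ln1p_gt0 b0.
have lbs0 := ln1p_gt0 bs0.
have rhs0 : 0 <= li * ln (1 + bs) * expR (- (li + lo) * bs `^ (2 / alpha)).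
  by rewrite mulr_ge0 // ?expR_ge0 // mulr_ge0 // ltW.
case: (eqVneq m 0) => [->|mn0]; first by rewrite !mul0r.
have mp : 0 < m by rewrite lt_neqAle eq_sym mn0 m0.
apply: core => //.
- by rewrite divr_gt0.
- by rewrite tE /bs hpsi.
- rewrite tE; case: hcap => [->|liN']; first by rewrite subrr mulr0.
  have : ln m <= ln li by rewrite ler_ln ?posrE // liN'.
  move=> h; rewrite mulr_le0_ge0 //; lra.
Qed.

Lemma suff_nash (alpha N1 N2 l1 l2 t : R) : 4 < alpha -> 0 < t ->
  psi (t `^ (alpha / 2)) = 2 / alpha * (l1 + l2) * t -> capok N1 l1 t -> capok N2 l2 t ->
  is_nash alpha N1 N2 l1 l2.
Proof.
move=> ha t0 hpsi c1 c2.
have c1' := c1; have c2' := c2.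
case: c1' => l10 l1N _ _; case: c2' => l20 l2N _ _.
split.
- by rewrite (ltW l10) l1N.
- by rewrite (ltW l20) l2N.
- by move=> m hm; rewrite /U1; apply: (player_suff ha t0 (ltW l20) hpsi c1 hm).
- move=> m hm; rewrite /U2 (rag_sym _ _ l1 m) (rag_sym _ _ l1 l2).
  by apply: (player_suff ha t0 (ltW l10) _ c2 hm); rewrite addrC.
Qed.


Lemma player_nec (alpha N li lo t : R) : 4 < alpha -> 0 < N -> 0 < t -> 0 <= lo ->
  0 <= li <= N ->
  psi (t `^ (alpha / 2)) = 2 / alpha * (li + lo) * t ->
  (forall m, 0 <= m <= N -> (rag_payoff alpha m m lo <= rag_payoff alpha li li lo)%E) ->
  capok N li t.
Proof.
move=> ha N0 t0 lo0 hli hpsi H.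
have a0 : 0 < alpha by lra.
set bs := t `^ (alpha / 2).
have bs0 : 0 < bs by apply: powR_gt0.
have tE : bs `^ (2 / alpha) = t by apply: powR_inv_alpha => //; exact: ltW.
have lbs0 := ln1p_gt0 bs0.
have up : (rag_payoff alpha li li lo <=
    (li * ln (1 + bs) * expR (- (li + lo) * bs `^ (2 / alpha)))%:E)%E.
  apply: pay_ub => b b0.
  case: (eqVneq li 0) => [->|lin0]; first by rewrite !mul0r.
  have lip : 0 < li by rewrite lt_neqAle eq_sym lin0; case/andP: hli.
  apply: core => //.
  - by rewrite divr_gt0.
  - by rewrite tE /bs hpsi.
  - by rewrite subrr mul0r.
apply: argmax => //.
move=> m hm.
have := le_trans (pay_lb alpha m m lo bs0) (le_trans (H m hm) up).
rewrite lee_fin tE.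
have sp : forall x, expR (- (x + lo) * t) = expR (- (x * t)) * expR (- (lo * t)).
  by move=> x; rewrite -expRD; congr expR; ring.
rewrite !sp.
have K : 0 < ln (1 + bs) * expR (- (lo * t)) by rewrite mulr_gt0 ?expR_gt0.
have r : forall x, x * ln (1 + bs) * (expR (- (x * t)) * expR (- (lo * t))) =
  (x * expR (- (x * t))) * (ln (1 + bs) * expR (- (lo * t))) by move=> x; ring.
by rewrite !r ler_pM2r.
Qed.

Lemma nash_nec (alpha N1 N2 l1 l2 : R) : 4 < alpha -> 0 < N1 -> 0 < N2 ->
  is_nash alpha N1 N2 l1 l2 ->
  exists t, [/\ 0 < t, psi (t `^ (alpha / 2)) = 2 / alpha * (l1 + l2) * t,
     capok N1 l1 t & capok N2 l2 t].
Proof.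
move=> ha N10 N20 [/andP[l10 l1N] /andP[l20 l2N] H1 H2].
have a0 : 0 < alpha by lra.
have S0 : 0 < l1 + l2.
  rewrite lt_neqAle addr_ge0 // andbT; apply/eqP => S0.
  have e1 : l1 = 0 by lra.
  have e2 : l2 = 0 by lra.
  have := H1 N1; rewrite (ltW N10) lexx => /(_ isT).
  rewrite /U1 e2.
  have z : (rag_payoff alpha 0 0 0 <= 0%:E)%E by apply: pay_ub => b _; rewrite !mul0r.
  have p := pay_lb alpha N1 N1 0 (@ltr01 R).
  rewrite e1 => h.
  have := le_trans p (le_trans h z); rewrite lee_fin.
  have : 0 < N1 * ln (1 + 1) * expR (- (N1 + 0) * 1 `^ (2 / alpha)).
    by rewrite mulr_gt0 ?expR_gt0 // mulr_gt0 // ln1p_gt0.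
  lra.
have c0 : 0 < 2 / alpha * (l1 + l2) by rewrite mulr_gt0 // divr_gt0.
have [t t0 ht] := @psi_ivt R (alpha / 2) (2 / alpha * (l1 + l2)) 0 ltac:(lra) c0 ltac:(rewrite lexx; lra).
rewrite addr0 in ht.
exists t; split => //.
- apply: (player_nec ha N10 t0 l20) => //; first by rewrite l10 l1N.
- apply: (player_nec ha N20 t0 l10) => //; first by rewrite l20 l2N.
    by rewrite addrC.
  move=> m hm; have := H2 m hm.
  by rewrite /U2 (rag_sym _ _ l1 m) (rag_sym _ _ l1 l2).
Qed.


Lemma capok_same (N l m t : R) : 0 < t -> capok N l t -> capok N m t -> l = m.
Proof.
move=> t0 [l0 lN lt1 hl] [m0 mN mt1 hm].
case: hl => hl; case: hm => hm.
- by apply: (mulIf (x := t)); [rewrite gt_eqF | rewrite hl hm].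
- apply/le_anti/andP; split; first by rewrite hm.
  by rewrite -(ler_pM2r t0) hl.
- apply/le_anti/andP; split; last by rewrite hl.
  by rewrite -(ler_pM2r t0) hm.
- by rewrite hl hm.
Qed.

Lemma capok_mono (N l m t s : R) : 0 < t -> t < s -> capok N l t -> capok N m s ->
  l * t <= m * s.
Proof.
move=> t0 ts [l0 lN lt1 hl] [m0 mN mt1 hm].
case: hm => [->//|->]; nra.
Qed.

Definition EQ (alpha N1 N2 l1 l2 t : R) := [/\ 0 < t,
  psi (t `^ (alpha / 2)) = 2 / alpha * (l1 + l2) * t, capok N1 l1 t & capok N2 l2 t].

Lemma EQ_nlt (alpha N1 N2 l1 l2 t m1 m2 s : R) : 4 < alpha ->
  EQ alpha N1 N2 l1 l2 t -> EQ alpha N1 N2 m1 m2 s -> ~ t < s.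
Proof.
move=> ha [t0 ht c1 c2] [s0 hs d1 d2] ts.
have a0 : 0 < alpha / 2 by lra.
have p : t `^ (alpha / 2) < s `^ (alpha / 2).
  by apply: gt0_ltr_powR => //; rewrite nnegrE ltW.
have := psi_decr (powR_gt0 _ t0) p.
rewrite ht hs.
have := capok_mono t0 ts c1 d1.
have := capok_mono t0 ts c2 d2.
have dp : 0 < 2 / alpha by rewrite divr_gt0 //; lra.
move=> h2 h1 h.
have : (l1 + l2) * t <= (m1 + m2) * s by lra.
move=> h3.
have := ler_wpM2l (ltW dp) h3.
rewrite !mulrA; lra.
Qed.

Lemma EQ_uniq (alpha N1 N2 l1 l2 t m1 m2 s : R) : 4 < alpha ->
  EQ alpha N1 N2 l1 l2 t -> EQ alpha N1 N2 m1 m2 s -> (m1, m2) = (l1, l2).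
Proof.
move=> ha E1 E2.
case: (ltgtP t s) => ts.
- by case: (EQ_nlt ha E1 E2 ts).
- by case: (EQ_nlt ha E2 E1 ts).
- move: E1 E2 => [t0 _ c1 c2] [_ _ d1 d2].
  rewrite ts in c1 c2 t0.
  by rewrite (capok_same t0 c1 d1) (capok_same t0 c2 d2).
Qed.


Lemma psi_pow_decr (alpha t s : R) : 0 < alpha -> 0 < t -> t < s ->
  psi (s `^ (alpha / 2)) < psi (t `^ (alpha / 2)).
Proof.
move=> a0 t0 ts.
have a2 : 0 < alpha / 2 by rewrite divr_gt0.
apply: psi_decr; first exact: powR_gt0.
by apply: gt0_ltr_powR => //; rewrite nnegrE ltW //; lra.
Qed.

Lemma psi_pow_noninc (alpha t s : R) : 0 < alpha -> 0 < t -> t <= s ->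
  psi (s `^ (alpha / 2)) <= psi (t `^ (alpha / 2)).
Proof.
move=> a0 t0; rewrite le_eqVlt => /predU1P[->//|ts].
exact/ltW/psi_pow_decr.
Qed.

Lemma L_psi (alpha L : R) : 4 < alpha -> 0 < L ->
  alpha / 4 = (1 + L `^ (alpha / 4)) * ln (1 + L `^ (- (alpha / 4))) ->
  psi ((Num.sqrt L)^-1 `^ (alpha / 2)) = 2 / alpha * (Num.sqrt L + Num.sqrt L) * (Num.sqrt L)^-1.
Proof.
move=> ha L0 hL.
have sL0 : 0 < Num.sqrt L by rewrite sqrtr_gt0.
have -> : (Num.sqrt L)^-1 `^ (alpha / 2) = L `^ (- (alpha / 4)).
  rewrite -powR12_sqrt; last exact: ltW.
  by rewrite -powRN -powRrM; congr powR; field.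
set B := L `^ (- (alpha / 4)).
have B0 : 0 < B by apply: powR_gt0.
have LB : L `^ (alpha / 4) = B^-1 by rewrite /B powRN invrK.
rewrite LB in hL.
have l0 := ln1p_gt0 B0.
have key : (1 + B) * ln (1 + B) = B * (alpha / 4).
  by rewrite hL; field; rewrite gt_eqF.
rewrite /psi key; field.
by rewrite !gt_eqF //; lra.
Qed.

Lemma x_psi (alpha N1 x : R) : 4 < alpha -> 0 < x ->
  N1 = x * (alpha / (2 * (1 + x `^ (alpha / 2)) * ln (1 + x `^ (- (alpha / 2)))) - 1) ->
  psi (x^-1 `^ (alpha / 2)) = 2 / alpha * (N1 + x) * x^-1.
Proof.
move=> ha x0 hx.
set P := x `^ (alpha / 2).
have P0 : 0 < P by apply: powR_gt0.
have -> : x^-1 `^ (alpha / 2) = P^-1.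
  have h := @powRM R x (x^-1) (alpha / 2) (ltW x0) (ltW (eq_ind_r is_true x0 (invr_gt0 x))).
  rewrite mulfV ?gt_eqF // powR1 in h.
  apply: (mulfI (x := P)); first by rewrite gt_eqF.
  by rewrite mulfV ?gt_eqF // -h.
rewrite powRN -/P in hx.
have Pi0 : 0 < P^-1 by rewrite invr_gt0.
have l0 := ln1p_gt0 Pi0.
rewrite hx /psi; field.
by rewrite !gt_eqF //; lra.
Qed.


Lemma capok_int (N l t : R) : 0 < l -> l <= N -> l * t = 1 -> capok N l t.
Proof. by move=> l0 lN lt; split => //; [rewrite lt | left]. Qed.

Lemma capok_cap (N t : R) : 0 < N -> N * t <= 1 -> capok N N t.
Proof. by move=> N0 Nt; split => //; right. Qed.


Lemma inv_le (a b : R) : 0 < a -> a <= b -> b^-1 <= a^-1.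
Proof.
move=> a0 ab; have b0 : 0 < b by apply: lt_le_trans ab.
by rewrite lef_pV2 ?posrE.
Qed.

Lemma inv_lt (a b : R) : 0 < a -> a < b -> b^-1 < a^-1.
Proof.
move=> a0 ab; have b0 : 0 < b by apply: lt_trans ab.
by rewrite ltf_pV2 ?posrE.
Qed.

End Game.

Unset Implicit Arguments.

Theorem theorem5 (R : realType) (alpha N1 N2 L : R) :
  4 < alpha -> 0 < N1 -> N1 <= N2 ->
  0 < L ->
  alpha / 4 = (1 + L `^ (alpha / 4)) * ln (1 + L `^ (- (alpha / 4))) ->
  exists l : R * R,
    [/\ is_nash alpha N1 N2 l.1 l.2,
        (forall m1 m2 : R, is_nash alpha N1 N2 m1 m2 -> (m1, m2) = l),
        (Num.sqrt L < N1 -> l = (Num.sqrt L, Num.sqrt L)) &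
        (~ (Num.sqrt L < N1) ->
           forall x : R, 0 < x ->
             N1 = x * (alpha / (2 * (1 + x `^ (alpha / 2)) * ln (1 + x `^ (- (alpha / 2)))) - 1) ->
             l = (N1, Num.min x N2))].
Proof.
move=> ha N10 N12 L0 hL.
have a0 : 0 < alpha by lra.
have N20 : 0 < N2 by lra.
have EL := L_psi ha L0 hL.
set sL := Num.sqrt L in EL *.
have sL0 : 0 < sL by rewrite sqrtr_gt0.
set tL := sL^-1 in EL *.
have tL0 : 0 < tL by rewrite invr_gt0.
have stL : sL * tL = 1 by rewrite mulfV ?gt_eqF.
have hd : 0 < 2 / alpha by rewrite divr_gt0.
have hd1 : 2 / alpha < 1 by rewrite ltr_pdivrMr //; lra.
have a1 : 1 <= alpha / 2 by rewrite ler_pdivlMr //; lra.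
have EL2 : psi (tL `^ (alpha / 2)) = 2 / alpha * 2.
  by rewrite EL -mulrA; congr (_ * _); rewrite mulrDl stL.
have ivt12 : exists2 t1, 0 < t1 & psi (t1 `^ (alpha / 2)) = 2 / alpha * (N1 + N2) * t1.
  have c0 : 0 < 2 / alpha * (N1 + N2) by rewrite mulr_gt0 //; lra.
  have [t1 t10 ht1] := @psi_ivt R (alpha / 2) _ 0 a1 c0 ltac:(rewrite lexx; lra).
  by exists t1 => //; rewrite ht1 addr0.
have [[l1 l2] [t Et]] : exists l : R * R, exists t, EQ alpha N1 N2 l.1 l.2 t.
  case: (ltP sL N1) => hs.
  - exists (sL, sL), tL; split => //.
    + exact: capok_int (ltW hs) stL.
    + apply: (capok_int sL0 _ stL); lra.
  - have [t1 t10 ht1] := ivt12.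
    case: (leP (N2 * t1) 1) => h.
    + exists (N1, N2), t1; split => //.
      * apply: (capok_cap N10); nra.
      * exact: capok_cap N20 h.
    + have c0 : 0 < 2 / alpha * N1 by rewrite mulr_gt0.
      have e01 : 0 <= 2 / alpha < 1 by rewrite (ltW hd) hd1.
      have [t t0 ht] := @psi_ivt R (alpha / 2) _ (2 / alpha) a1 c0 e01.
      have tt : t^-1 * t = 1 by rewrite mulVf ?gt_eqF.
      exists (N1, t^-1), t; split => //=.
      * rewrite ht; field; rewrite gt_eqF //; lra.
      * apply: (capok_cap N10).
        rewrite leNgt; apply/negP => h2.
        have : tL < t.
          have : tL <= N1^-1 by rewrite /tL; exact: inv_le N10 hs.
          have : N1^-1 < t by rewrite -(ltr_pM2l N10) mulfV ?gt_eqF.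
          lra.
        move=> /(psi_pow_decr a0 tL0); rewrite ht EL2.
        have : 2 / alpha * 2 < 2 / alpha * N1 * t + 2 / alpha.
          nra.
        lra.
      * apply: (capok_int _ _ tt); first by rewrite invr_gt0.
        rewrite -(ler_pM2r t0) tt.
        rewrite leNgt; apply/negP => h2.
        have tt1 : t < t1 by nra.
        have := psi_pow_decr a0 t0 tt1; rewrite ht ht1.
        have : N1 * t <= N1 * t1 by rewrite ler_pM2l // ltW.
        nra.
exists (l1, l2); split => /=.
- by case: Et => t0 ht c1 c2; exact: suff_nash ha t0 ht c1 c2.
- move=> m1 m2 /(nash_nec ha N10 N20) [s [s0 hs d1 d2]].
  exact: (EQ_uniq ha Et (And4 s0 hs d1 d2)).
- move=> hs.
  have E2 : EQ alpha N1 N2 sL sL tL.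
    split => //.
    + exact: capok_int (ltW hs) stL.
    + apply: (capok_int sL0 _ stL); lra.
  by rewrite (EQ_uniq ha Et E2).
- move=> /negP; rewrite -leNgt => hs x x0 hx.
  have Ex := x_psi ha x0 hx.
  set q := x^-1 in Ex.
  have q0 : 0 < q by rewrite invr_gt0.
  have xq : x * q = 1 by rewrite mulfV ?gt_eqF.
  have xle : x <= sL.
    rewrite leNgt; apply/negP => h.
    have : q < tL by rewrite /q /tL; exact: inv_lt sL0 h.
    move=> /(psi_pow_decr a0 q0); rewrite Ex EL2 => h2.
    have : 2 < (N1 + x) * q by nra.
    nra.
  have N1x : N1 <= x.
    have : tL <= q by rewrite /q /tL; exact: inv_le x0 xle.
    move=> /(psi_pow_noninc a0 tL0); rewrite Ex EL2 => h2.
    have : (N1 + x) * q <= 2 by nra.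
    nra.
  case: (leP x N2) => hxN.
  +
    have E2 : EQ alpha N1 N2 N1 x q.
      split => //.
      * apply: (capok_cap N10); nra.
      * exact: capok_int x0 hxN xq.
    by rewrite (EQ_uniq ha Et E2).
  +
    have [t1 t10 ht1] := ivt12.
    have h : N2 * t1 <= 1.
      rewrite leNgt; apply/negP => h.
      have qt1 : q < t1 by nra.
      have := psi_pow_decr a0 q0 qt1; rewrite ht1 Ex => h2.
      have h3 : (N1 + N2) * t1 < (N1 + x) * q.
        by nra.
      nra.
    have E2 : EQ alpha N1 N2 N1 N2 t1.
      split => //.
      * apply: (capok_cap N10); nra.
      * exact: capok_cap N20 h.
    by rewrite (EQ_uniq ha Et E2).
Qed.
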